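(* Let $(P,H,V,\theta)$ be a frame resolution of $(M,\Omega^1M)$ and let $\omega$ be a left strong connection on $P$. For $w\in\Omega^1M$ write $s_\theta^{-1}(w)=\sum_i p_i\otimes v_i\in\mathcal{E}$ and set \[\nabla(w)=\sum_i(\mathrm{id}-\Pi_\omega)(dp_i)\,\theta(v_i),\] the covariant derivative $D=(\mathrm{id}-\Pi_\omega)d$ on the associated bundle transported via $s_\theta$. Then $\nabla$ is a well-defined map $\Omega^1M\to\Omega^1M\otimes_M\Omega^1M=\Omega^2M$, it obeys the derivation property $\nabla(mw)=m\nabla(w)+(dm)w$ for all $m\in M$, $w\in\Omega^1M$, and explicitly \[\nabla(w)=1\otimes w-\sum_i p_i\otimes\theta(v_i)-\sum_i p_i{}^{(1)}\,\omega(p_i{}^{(2)})\,\theta(v_i).\]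
   Context: $k$ is a field. For a unital $k$-algebra $A$, $\Omega^1A=\ker(\mu:A\otimes A\to A)$ is the universal calculus with $da=1\otimes a-a\otimes1$; $\Omega^nA=\Omega^1A\otimes_A\cdots\otimes_A\Omega^1A$ ($n$ factors) is identified with a subspace of $A^{\otimes(n+1)}$, products of forms (and of forms with elements of $A$) are by concatenation, multiplying adjacent tensor factors: $(a_0\otimes\cdots\otimes a_n)(b_0\otimes\cdots\otimes b_m)=a_0\otimes\cdots\otimes a_nb_0\otimes\cdots\otimes b_m$. A quantum principal bundle: $H$ a Hopf algebra with coproduct $\Delta h=h_{(1)}\otimes h_{(2)}$, counit $\epsilon$, invertible antipode $S$; $P$ a right $H$-comodule algebra with coaction $\Delta_R(p)=p^{(1)}\otimes p^{(2)}$; $M=\{p:\Delta_Rp=p\otimes1\}$; $P$ flat as an $M$-module; and $P\otimes_MP\to P\otimes H$, $p\otimes p'\mapsto pp'^{(1)}\otimes p'^{(2)}$ bijective. For a right $H$-comodule $V$ (coaction $v\mapsto v^{(1)}\otimes v^{(2)}$), $\mathcal{E}=(P\otimes V)^H$ is the space of invariants under $p\otimes v\mapsto p^{(1)}\otimes v^{(1)}\otimes p^{(2)}v^{(2)}$. A linear $\theta:V\to\Omega^nP$ is right strongly tensorial if it is an $H$-comodule map (coaction on $\Omega^nP\subset P^{\otimes(n+1)}$ the tensor product coaction) with image in $P\Omega^nM$. A frame resolution of $(M,\Omega^1M)$ is a quantum principal bundle $(P,H)$ over $M$, a right $H$-comodule $V$ and a right strongly tensorial $\theta:V\to P\Omega^1M$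 such that $s_\theta:\mathcal{E}\to\Omega^1M$, $s_\theta(\sum p_i\otimes v_i)=\sum p_i\theta(v_i)$, is bijective. A connection is a linear $\omega:H\to\Omega^1P$ with $\omega(1)=0$, $\sum\omega_\alpha\omega^\alpha{}^{(1)}\otimes\omega^\alpha{}^{(2)}=1\otimes(h-\epsilon(h)1)$ where $\omega(h)=\sum\omega_\alpha\otimes\omega^\alpha$, and $\Delta_R(\omega(h))=\omega(h_{(2)})\otimes S(h_{(1)})h_{(3)}$. Its projection is $\Pi_\omega:\Omega^1P\to\Omega^1P$, $\Pi_\omega(\sum p\otimes p')=\sum pp'^{(1)}\omega(p'^{(2)})$. It is left strong if $(\mathrm{id}-\Pi_\omega)(dp)\in(\Omega^1M)P$ for all $p\in P$. *)

(* Defs.v *)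
(* Tensor products are handled through *formal sums of pure tensors*:
   an element of U (x) V is represented by a list  s : seq (U * V)  standing
   for  \sum_(x <- s) x.1 (x) x.2 , and U (x) V (x) W by  seq (U * V * W).
   Equality in the tensor product is defined by its universal property:
   a formal sum is zero in U (x)_k V iff every k-bilinear map out of U * V
   (into any k-vector space) kills it; for balanced tensor products over a
   subalgebra M, iff every M-balanced biadditive map (into any abelian group)
   kills it.  Maps into tensor products (coproducts, coactions, theta, omega)
   are functions into formal sums, with all axioms stated up to this equality. *)
From HB Require Import structures.
From mathcomp Require Import all_boot all_order all_algebra.
Set Implicit Arguments. Unset Strict Implicit. Unset Printing Implicit Defensive.
Import Order.TTheory GRing.Theory.
Local Open Scope ring_scope.

Section Tensors.
Variable k : fieldType.

Definition bilinear2 {U V W : lmodType k} (f : U -> V -> W) : Prop :=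
  (forall (a : k) u u' v, f (a *: u + u') v = a *: f u v + f u' v) /\
  (forall (a : k) u v v', f u (a *: v + v') = a *: f u v + f u v').

Definition trilinear3 {U V X W : lmodType k} (f : U -> V -> X -> W) : Prop :=
  (forall (a : k) u u' v x, f (a *: u + u') v x = a *: f u v x + f u' v x) /\
  (forall (a : k) u v v' x, f u (a *: v + v') x = a *: f u v x + f u v' x) /\
  (forall (a : k) u v x x', f u v (a *: x + x') = a *: f u v x + f u v x').

Definition tzero2 {U V : lmodType k} (s : seq (U * V)) : Prop :=
  forall (W : lmodType k) (f : U -> V -> W), bilinear2 f ->
    \sum_(x <- s) f x.1 x.2 = 0.

Definition tzero3 {U V X : lmodType k} (s : seq (U * V * X)) : Prop :=
  forall (W : lmodType k) (f : U -> V -> X -> W), trilinear3 f ->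
    \sum_(x <- s) f x.1.1 x.1.2 x.2 = 0.

Definition neg2 {U V : lmodType k} (s : seq (U * V)) : seq (U * V) :=
  [seq (- x.1, x.2) | x <- s].
Definition neg3 {U V X : lmodType k} (s : seq (U * V * X)) : seq (U * V * X) :=
  [seq (- x.1.1, x.1.2, x.2) | x <- s].
Definition scale2 {U V : lmodType k} (a : k) (s : seq (U * V)) : seq (U * V) :=
  [seq (a *: x.1, x.2) | x <- s].

Definition teq2 {U V : lmodType k} (s t : seq (U * V)) : Prop :=
  tzero2 (s ++ neg2 t).
Definition teq3 {U V X : lmodType k} (s t : seq (U * V * X)) : Prop :=
  tzero3 (s ++ neg3 t).

Definition tlinear {U U' V' : lmodType k} (f : U -> seq (U' * V')) : Prop :=
  forall (a : k) u u', teq2 (f (a *: u + u')) (scale2 a (f u) ++ f u').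

Section Hopf.
Variable H : algType k.
Variables (Delta : H -> seq (H * H)) (eps : H -> k) (S : H -> H).

Definition is_hopf_algebra : Prop :=
  [/\ tlinear Delta /\
      (forall h g, teq2 (Delta (h * g))
          [seq (x.1 * y.1, x.2 * y.2) | x <- Delta h, y <- Delta g]),
      teq2 (Delta 1) [:: (1, 1)],
      (forall h, teq3 [seq (y.1, y.2, x.2) | x <- Delta h, y <- Delta x.1]
                      [seq (x.1, y.1, y.2) | x <- Delta h, y <- Delta x.2]) &
      ([/\ (forall (a : k) h g, eps (a *: h + g) = a * eps h + eps g), (forall h g, eps (h * g) = eps h * eps g),
          eps 1 = 1,
          (forall h, \sum_(x <- Delta h) eps x.1 *: x.2 = h) &
          (forall h, \sum_(x <- Delta h) eps x.2 *: x.1 = h)] /\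
      [/\ (forall (a : k) h g, S (a *: h + g) = a *: S h + S g), bijective S,
          (forall h, \sum_(x <- Delta h) S x.1 * x.2 = eps h *: 1) &
          (forall h, \sum_(x <- Delta h) x.1 * S x.2 = eps h *: 1)])].
End Hopf.

Definition is_right_comodule (H : algType k) (Delta : H -> seq (H * H))
    (eps : H -> k) (V : lmodType k) (delta : V -> seq (V * H)) : Prop :=
  [/\ tlinear delta,
      (forall v, teq3 [seq (y.1, y.2, x.2) | x <- delta v, y <- delta x.1]
                      [seq (x.1, y.1, y.2) | x <- delta v, y <- Delta x.2]) &
      (forall v, \sum_(x <- delta v) eps x.2 *: x.1 = v)].

Definition is_comodule_algebra (H : algType k) (Delta : H -> seq (H * H))
    (eps : H -> k) (P : algType k) (DR : P -> seq (P * H)) : Prop :=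
  [/\ is_right_comodule Delta eps DR,
      (forall p q, teq2 (DR (p * q))
          [seq (x.1 * y.1, x.2 * y.2) | x <- DR p, y <- DR q]) &
      teq2 (DR 1) [:: (1, 1)]].

Section Bundle.
Variables (H : algType k) (P : algType k) (DR : P -> seq (P * H)).

(* M = { p | Delta_R p = p (x) 1 } *)
Definition coinv (p : P) : Prop := teq2 (DR p) [:: (p, 1)].

(* balanced tensor product P (x)_M N, N a left M-module given by an action
   act (only its values on elements of M matter) *)
Definition is_left_Mmodule (N : zmodType) (act : P -> N -> N) : Prop :=
  [/\ (forall m n n', coinv m -> act m (n + n') = act m n + act m n'),
      (forall m m' n, coinv m -> coinv m' -> act (m + m') n = act m n + act m' n),
      (forall m m' n, coinv m -> coinv m' -> act (m * m') n = act m (act m' n)) &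
      (forall n, act 1 n = n)].

Definition tzeroPM (N : zmodType) (act : P -> N -> N) (s : seq (P * N)) : Prop :=
  forall (W : zmodType) (g : P -> N -> W),
    (forall p p' n, g (p + p') n = g p n + g p' n) ->
    (forall p n n', g p (n + n') = g p n + g p n') ->
    (forall p m n, coinv m -> g (p * m) n = g p (act m n)) ->
    \sum_(x <- s) g x.1 x.2 = 0.

Definition flat_right_M : Prop :=
  forall (N N' : zmodType) (act : P -> N -> N) (act' : P -> N' -> N')
         (f : N -> N'),
    is_left_Mmodule act -> is_left_Mmodule act' ->
    (forall x y, f (x + y) = f x + f y) ->
    (forall m n, coinv m -> f (act m n) = act' m (f n)) ->
    injective f ->
    forall s : seq (P * N),
      tzeroPM act' [seq (x.1, f x.2) | x <- s] -> tzeroPM act s.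

Definition canmap (s : seq (P * P)) : seq (P * H) :=
  [seq (x.1 * y.1, y.2) | x <- s, y <- DR x.2].

Definition tzeroPMP (s : seq (P * P)) : Prop := tzeroPM (fun m q => m * q) s.

Definition galois_bijective : Prop :=
  (forall s, tzero2 (canmap s) -> tzeroPMP s) /\
  (forall t : seq (P * H), exists s, teq2 (canmap s) t).
End Bundle.

Definition is_QPB (H : algType k) (Delta : H -> seq (H * H)) (eps : H -> k)
    (S : H -> H) (P : algType k) (DR : P -> seq (P * H)) : Prop :=
  [/\ is_hopf_algebra Delta eps S, is_comodule_algebra Delta eps DR,
      flat_right_M DR & galois_bijective DR].

Section Calculus.
Variable P : algType k.

Definition dP (a : P) : seq (P * P) := [:: (1, a); (- a, 1)].
Definition mu2 (s : seq (P * P)) : P := \sum_(x <- s) x.1 * x.2.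
Definition inOmega1 (s : seq (P * P)) : Prop := mu2 s = 0.

(* products by concatenation *)
Definition lmul (p : P) (s : seq (P * P)) : seq (P * P) := [seq (p * x.1, x.2) | x <- s].
Definition rmul (s : seq (P * P)) (p : P) : seq (P * P) := [seq (x.1, x.2 * p) | x <- s].
Definition mul11 (s t : seq (P * P)) : seq (P * P * P) :=
  [seq (x.1, x.2 * y.1, y.2) | x <- s, y <- t].
Definition lmul3 (p : P) (s : seq (P * P * P)) : seq (P * P * P) :=
  [seq (p * x.1.1, x.1.2, x.2) | x <- s].
Definition one_tensor (s : seq (P * P)) : seq (P * P * P) :=
  [seq (1, x.1, x.2) | x <- s].

Variable inM : P -> Prop.
(* Omega^1 M, seen inside P (x) P (M (x) M -> P (x) P is injective over a field) *)
Definition inOmega1M (s : seq (P * P)) : Prop :=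
  inOmega1 s /\ exists2 s', (forall x, x \in s' -> inM x.1 /\ inM x.2) & teq2 s s'.
Definition inPOmega1M (s : seq (P * P)) : Prop :=
  exists l : seq (P * seq (P * P)),
    (forall x, x \in l -> inOmega1M x.2) /\
    teq2 s (flatten [seq lmul x.1 x.2 | x <- l]).
Definition inOmega1MP (s : seq (P * P)) : Prop :=
  exists l : seq (seq (P * P) * P),
    (forall x, x \in l -> inOmega1M x.1) /\
    teq2 s (flatten [seq rmul x.1 x.2 | x <- l]).
(* Omega^2 M = Omega^1 M (x)_M Omega^1 M, identified with its image in
   M^(x)3 (inside P^(x)3) under concatenation *)
Definition inOmega2M (t : seq (P * P * P)) : Prop :=
  exists l : seq (seq (P * P) * seq (P * P)),
    (forall x, x \in l -> inOmega1M x.1 /\ inOmega1M x.2) /\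
    teq3 t (flatten [seq mul11 x.1 x.2 | x <- l]).
End Calculus.

Section Frame.
Variables (H : algType k) (Delta : H -> seq (H * H)) (eps : H -> k) (S : H -> H).
Variables (P : algType k) (DR : P -> seq (P * H)).
Variables (V : lmodType k) (delta : V -> seq (V * H)) (theta : V -> seq (P * P)).

Definition coactPP (s : seq (P * P)) : seq (P * P * H) :=
  flatten [seq [seq (y.1, z.1, y.2 * z.2) | y <- DR x.1, z <- DR x.2] | x <- s].

Definition in_E (t : seq (P * V)) : Prop :=
  teq3 (flatten [seq [seq (y.1, z.1, y.2 * z.2) | y <- DR x.1, z <- delta x.2] | x <- t])
       [seq (x.1, x.2, 1) | x <- t].

Definition right_strongly_tensorial : Prop :=
  [/\ tlinear theta,
      (forall v, inOmega1 (theta v)),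
      (forall v, teq3 (coactPP (theta v))
                      [seq (y.1, y.2, x.2) | x <- delta v, y <- theta x.1]) &
      (forall v, inPOmega1M (coinv DR) (theta v))].

Definition s_theta (t : seq (P * V)) : seq (P * P) :=
  flatten [seq lmul x.1 (theta x.2) | x <- t].

Definition is_frame_resolution : Prop :=
  [/\ is_QPB Delta eps S DR /\ is_right_comodule Delta eps delta,
      right_strongly_tensorial,
      (forall t, in_E t -> inOmega1M (coinv DR) (s_theta t)),
      (forall t t', in_E t -> in_E t' -> teq2 (s_theta t) (s_theta t') -> teq2 t t') &
      (forall w, inOmega1M (coinv DR) w -> exists2 t, in_E t & teq2 (s_theta t) w)].

Variable omega : H -> seq (P * P).

Definition is_connection : Prop :=
  [/\ tlinear omega, (forall h, inOmega1 (omega h)),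
      tzero2 (omega 1),
      (forall h, teq2 [seq (x.1 * y.1, y.2) | x <- omega h, y <- DR x.2]
                      [:: (1, h - eps h *: 1)]) &
      (forall h, teq3 (coactPP (omega h))
          (flatten [seq [seq (z.1, z.2, S y.1 * x.2) | y <- Delta x.1, z <- omega y.2]
                   | x <- Delta h]))].

Definition Pi_omega (s : seq (P * P)) : seq (P * P) :=
  flatten [seq lmul (x.1 * y.1) (omega y.2) | x <- s, y <- DR x.2].

Definition Dcov (p : P) : seq (P * P) := dP p ++ neg2 (Pi_omega (dP p)).

Definition left_strong : Prop :=
  forall p, inOmega1MP (coinv DR) (Dcov p).

(* nabla on a representative t = sum p_i (x) v_i of s_theta^{-1}(w) *)
Definition nabla_rep (t : seq (P * V)) : seq (P * P * P) :=
  flatten [seq mul11 (Dcov x.1) (theta x.2) | x <- t].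

Definition nabla_formula (w : seq (P * P)) (t : seq (P * V)) : seq (P * P * P) :=
  one_tensor w
  ++ neg3 [seq (x.1, y.1, y.2) | x <- t, y <- theta x.2]
  ++ neg3 (flatten [seq mul11 (lmul y.1 (omega y.2)) (theta x.2)
                   | x <- t, y <- DR x.1]).
End Frame.
End Tensors.

(* Main.v *)
Require Import Defs.
From HB Require Import structures.
From mathcomp Require Import all_boot all_order all_algebra.
From mathcomp Require Import boolp classical_sets.
Import GRing.Theory.
Local Open Scope ring_scope.
Set Implicit Arguments. Unset Strict Implicit. Unset Printing Implicit Defensive.

Section Lin.
Variable k : fieldType.

Definition lin1 {U W : lmodType k} (F : U -> W) : Prop :=
  forall (a : k) u u', F (a *: u + u') = a *: F u + F u'.

Section L1.
Variables (U W : lmodType k) (F : U -> W) (hF : lin1 F).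
Lemma lin1_0 : F 0 = 0.
Proof. have := hF 1 0 0; rewrite !scale1r addr0 => h. by apply: (@addIr _ (F 0)); rewrite add0r -h. Qed.
Lemma lin1_D u u' : F (u + u') = F u + F u'.
Proof. by rewrite -[u in LHS]scale1r hF scale1r. Qed.
Lemma lin1_Z a u : F (a *: u) = a *: F u.
Proof. by rewrite -[a *: u]addr0 hF lin1_0 addr0. Qed.
Lemma lin1_N u : F (- u) = - F u.
Proof. by rewrite -scaleN1r lin1_Z scaleN1r. Qed.
Lemma lin1_B u u' : F (u - u') = F u - F u'.
Proof. by rewrite lin1_D lin1_N. Qed.
Lemma lin1_sum (I : Type) (r : seq I) (g : I -> U) :
  F (\sum_(i <- r) g i) = \sum_(i <- r) F (g i).
Proof. elim: r => [|x r IH]; first by rewrite !big_nil lin1_0.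
by rewrite !big_cons lin1_D IH. Qed.
End L1.

Lemma lin1_id (U : lmodType k) : lin1 (fun u : U => u).
Proof. by []. Qed.
Lemma lin1_sumf (U W : lmodType k) (I : Type) (r : seq I) (G : U -> I -> W) :
  (forall i, lin1 (fun u => G u i)) -> lin1 (fun u => \sum_(i <- r) G u i).
Proof. move=> hG a u u'; rewrite scaler_sumr -big_split /=.
by apply: eq_bigr => i _; rewrite hG. Qed.
Lemma lin1_addf (U W : lmodType k) (F G : U -> W) :
  lin1 F -> lin1 G -> lin1 (fun u => F u + G u).
Proof. move=> hF hG a u u'; rewrite hF hG scalerDr.
by rewrite -!addrA; congr (_ + _); rewrite addrC -!addrA; congr (_ + _); rewrite addrC. Qed.
Lemma lin1_oppf (U W : lmodType k) (F : U -> W) :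
  lin1 F -> lin1 (fun u => - F u).
Proof. by move=> hF a u u'; rewrite hF opprD scalerN. Qed.
Lemma lin1_scalef (U W : lmodType k) (c : k) (F : U -> W) :
  lin1 F -> lin1 (fun u => c *: F u).
Proof. by move=> hF a u u'; rewrite hF scalerDr !scalerA mulrC. Qed.
Lemma lin1_comp (U U' W : lmodType k) (F : U' -> W) (L : U -> U') :
  lin1 F -> lin1 L -> lin1 (fun u => F (L u)).
Proof. by move=> hF hL a u u'; rewrite hL hF. Qed.
Lemma lin1_scalv (U W : lmodType k) (l : U -> k) (w : W) :
  (forall (a : k) u u', l (a *: u + u') = a * l u + l u') -> lin1 (fun u => l u *: w).
Proof. by move=> hl a u u'; rewrite hl scalerDl scalerA. Qed.
Lemma lin1_const0 (U W : lmodType k) : lin1 (fun _ : U => (0 : W)).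
Proof. by move=> a u u'; rewrite scaler0 addr0. Qed.
Lemma lin1_mulr (A : algType k) (b : A) : lin1 (fun u : A => u * b).
Proof. by move=> a u u'; rewrite mulrDl scalerAl. Qed.
Lemma lin1_mull (A : algType k) (b : A) : lin1 (fun u : A => b * u).
Proof. by move=> a u u'; rewrite mulrDr scalerAr. Qed.

Lemma bil2P (U V W : lmodType k) (f : U -> V -> W) :
  bilinear2 f <-> (forall v, lin1 (fun u => f u v)) /\ (forall u, lin1 (fun v => f u v)).
Proof. split; move=> [h1 h2]; split.
- by move=> v a u u'; apply: h1.
- by move=> u a v v'; apply: h2.
- by move=> a u u' v; apply: (h1 v a u u').
- by move=> a u v v'; apply: (h2 u a v v').
Qed.
Lemma tri3P (U V X W : lmodType k) (f : U -> V -> X -> W) :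
  trilinear3 f <-> [/\ (forall v x, lin1 (fun u => f u v x)),
                       (forall u x, lin1 (fun v => f u v x)) &
                       (forall u v, lin1 (fun x => f u v x))].
Proof. split; [move=> [h1 [h2 h3]] | move=> [h1 h2 h3]].
- split; [move=> v x a u u' | move=> u x a v v' | move=> u v a x x']; by [apply: h1 | apply: h2 | apply: h3].
- split; [|split]; [move=> a u u' v x; apply: (h1 v x a u u') | move=> a u v v' x; apply: (h2 u x a v v') | move=> a u v x x'; apply: (h3 u v a x x')].
Qed.

Definition quadlin4 {U V X Y W : lmodType k} (f : U -> V -> X -> Y -> W) : Prop :=
  [/\ (forall v x y, lin1 (fun u => f u v x y)),
      (forall u x y, lin1 (fun v => f u v x y)),
      (forall u v y, lin1 (fun x => f u v x y)) &
      (forall u v x, lin1 (fun y => f u v x y))].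

Definition tzero4 {U V X Y : lmodType k} (s : seq (U * V * X * Y)) : Prop :=
  forall (W : lmodType k) (f : U -> V -> X -> Y -> W), quadlin4 f ->
    \sum_(x <- s) f x.1.1.1 x.1.1.2 x.1.2 x.2 = 0.

Lemma bil_N1 (U V W : lmodType k) (f : U -> V -> W) : bilinear2 f ->
  forall u v, f (- u) v = - f u v.
Proof. by move/bil2P=> [h1 _] u v; apply: (lin1_N (h1 v)). Qed.
Lemma tri_N1 (U V X W : lmodType k) (f : U -> V -> X -> W) : trilinear3 f ->
  forall u v x, f (- u) v x = - f u v x.
Proof. by move/tri3P=> [h1 _ _] u v x; apply: (lin1_N (h1 v x)). Qed.

Lemma sum_neg2 (U V W : lmodType k) (f : U -> V -> W) (t : seq (U * V)) : bilinear2 f ->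
  \sum_(x <- neg2 t) f x.1 x.2 = - \sum_(x <- t) f x.1 x.2.
Proof. move=> hf; rewrite big_map -sumrN; apply: eq_bigr => x _ /=; exact: bil_N1. Qed.
Lemma sum_neg3 (U V X W : lmodType k) (f : U -> V -> X -> W) (t : seq (U * V * X)) : trilinear3 f ->
  \sum_(x <- neg3 t) f x.1.1 x.1.2 x.2 = - \sum_(x <- t) f x.1.1 x.1.2 x.2.
Proof. move=> hf; rewrite big_map -sumrN; apply: eq_bigr => x _ /=; exact: tri_N1. Qed.

Lemma teq2P (U V : lmodType k) (s t : seq (U * V)) :
  teq2 s t <-> forall (W : lmodType k) (f : U -> V -> W), bilinear2 f ->
     \sum_(x <- s) f x.1 x.2 = \sum_(x <- t) f x.1 x.2.
Proof.
rewrite /teq2 /tzero2; split => h W f hf; move: (h W f hf);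
  rewrite big_cat sum_neg2 //.
- by move=> /eqP; rewrite subr_eq0 => /eqP.
- by move=> ->; apply: subrr.
Qed.

Lemma teq3P (U V X : lmodType k) (s t : seq (U * V * X)) :
  teq3 s t <-> forall (W : lmodType k) (f : U -> V -> X -> W), trilinear3 f ->
     \sum_(x <- s) f x.1.1 x.1.2 x.2 = \sum_(x <- t) f x.1.1 x.1.2 x.2.
Proof.
rewrite /teq3 /tzero3; split => h W f hf; move: (h W f hf);
  rewrite big_cat sum_neg3 //.
- by move=> /eqP; rewrite subr_eq0 => /eqP.
- by move=> ->; apply: subrr.
Qed.

Definition teq4 {U V X Y : lmodType k} (s t : seq (U * V * X * Y)) : Prop :=
  forall (W : lmodType k) (f : U -> V -> X -> Y -> W), quadlin4 f ->
     \sum_(x <- s) f x.1.1.1 x.1.1.2 x.1.2 x.2 = \sum_(x <- t) f x.1.1.1 x.1.1.2 x.1.2 x.2.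

Lemma teq2_refl (U V : lmodType k) (s : seq (U * V)) : teq2 s s.
Proof. by apply/teq2P. Qed.
Lemma teq2_sym (U V : lmodType k) (s t : seq (U * V)) : teq2 s t -> teq2 t s.
Proof. by move/teq2P=> h; apply/teq2P=> W f hf; rewrite h. Qed.
Lemma teq2_trans (U V : lmodType k) (s t u : seq (U * V)) : teq2 s t -> teq2 t u -> teq2 s u.
Proof. by move/teq2P=> h1 /teq2P h2; apply/teq2P=> W f hf; rewrite h1 ?h2. Qed.
Lemma teq3_refl (U V X : lmodType k) (s : seq (U * V * X)) : teq3 s s.
Proof. by apply/teq3P. Qed.
Lemma teq3_sym (U V X : lmodType k) (s t : seq (U * V * X)) : teq3 s t -> teq3 t s.
Proof. by move/teq3P=> h; apply/teq3P=> W f hf; rewrite h. Qed.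
Lemma teq3_trans (U V X : lmodType k) (s t u : seq (U * V * X)) : teq3 s t -> teq3 t u -> teq3 s u.
Proof. by move/teq3P=> h1 /teq3P h2; apply/teq3P=> W f hf; rewrite h1 ?h2. Qed.

Lemma tlinearP (U U' V' : lmodType k) (F : U -> seq (U' * V')) :
  tlinear F <-> forall (W : lmodType k) (g : U' -> V' -> W), bilinear2 g ->
     lin1 (fun u => \sum_(x <- F u) g x.1 x.2).
Proof.
rewrite /tlinear; split => h.
- move=> W g hg a u u'; move/teq2P: (h a u u') => ->//.
  rewrite big_cat big_map scaler_sumr; congr (_ + _); apply: eq_bigr => x _ /=.
  by move/bil2P: hg => [h1 _]; rewrite (lin1_Z (h1 _)).
- move=> a u u'; apply/teq2P => W g hg; rewrite (h W g hg) big_cat big_map scaler_sumr.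
  congr (_ + _); apply: eq_bigr => x _ /=.
  by move/bil2P: hg => [h1 _]; rewrite (lin1_Z (h1 _)).
Qed.

End Lin.


Section LA.
Variables (k : fieldType) (U : lmodType k).

Definition lincomb (b : seq U) (c : nat -> k) : U := \sum_(i < size b) c i *: b`_i.
Definition indep (b : seq U) : Prop :=
  forall c : nat -> k, lincomb b c = 0 -> forall i, (i < size b)%N -> c i = 0.

Lemma lincombD b c c' : lincomb b (fun i => c i + c' i) = lincomb b c + lincomb b c'.
Proof. by rewrite /lincomb -big_split; apply: eq_bigr => i _; rewrite scalerDl. Qed.
Lemma lincombZ b a c : lincomb b (fun i => a * c i) = a *: lincomb b c.
Proof. by rewrite /lincomb scaler_sumr; apply: eq_bigr => i _; rewrite scalerA. Qed.
Lemma lincomb0 b : lincomb b (fun _ => 0) = 0.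
Proof. by rewrite /lincomb big1 // => i _; rewrite scale0r. Qed.
Lemma lincombB b c c' : lincomb b (fun i => c i - c' i) = lincomb b c - lincomb b c'.
Proof.
rewrite (_ : (fun i => c i - c' i) = (fun i => c i + (-1) * c' i)); last first.
  by apply: funext => i; rewrite mulN1r.
by rewrite lincombD lincombZ scaleN1r.
Qed.
Lemma lincomb_delta b j : (j < size b)%N -> lincomb b (fun i => if i == j then 1 else 0) = b`_j.
Proof.
move=> hj; rewrite /lincomb (bigD1 (Ordinal hj)) //= eqxx scale1r big1 ?addr0 //.
move=> i hi; case: ifP => [/eqP e|_]; last by rewrite scale0r.
by move: hi; rewrite (_ : i = Ordinal hj) ?eqxx //; apply: val_inj.
Qed.

Section FE.
Variables (b : seq U) (hb : indep b).
Let Sp (x : U) : Prop := exists c, x = lincomb b c.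
Let Fam : set (set U) := fun C =>
  [/\ (forall x y, C x -> C y -> C (x + y)), (forall (a : k) x, C x -> C (a *: x)) &
      (forall x, C x -> Sp x -> x = 0)].

Lemma exC : exists C : set U, Fam C /\ forall u, exists c, exists w, (w = 0 \/ C w) /\ u = lincomb b c + w.
Proof.
have [C [FC Cmax]] : exists A : set U, Fam A /\ (forall B : set U, (A `<` B)%classic -> ~ Fam B).
  apply: Zorn_bigcup => F FF Ftot; split.
  - move=> x y [X FX Xx] [Y FY Yy].
    have [XY|YX] := Ftot X Y FX FY.
    + by exists Y => //; have [h _ _] := FF Y FY; apply: h => //; apply: XY.
    + by exists X => //; have [h _ _] := FF X FX; apply: h => //; apply: YX.
  - by move=> a x [X FX Xx]; exists X => //; have [_ h _] := FF X FX; apply: h.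
  - by move=> x [X FX Xx] Sx; have [_ _ h] := FF X FX; apply: h.
exists C; split => // u; apply: contrapT => hu.
have [Cadd Cscale Cmeet] := FC.
pose B : set U := fun y => exists w, exists l : k, (w = 0 \/ C w) /\ y = w + l *: u.
have CB : forall y, C y -> B y by move=> y Cy; exists y, 0; split; [right | rewrite scale0r addr0].
have W0 : forall w w' (a : k), (w = 0 \/ C w) -> (w' = 0 \/ C w') -> (a *: w + w' = 0 \/ C (a *: w + w')).
  move=> w w' a [->|Cw] [->|Cw']; rewrite ?scaler0 ?add0r ?addr0; [by left | by right | by right; apply: Cscale |].
  by right; apply: Cadd => //; apply: Cscale.
apply: (Cmax B).
  split; first by [].
  move=> hBC; apply: hu; exists (fun _ => 0), u; rewrite lincomb0 add0r; split => //; right.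
  by apply: hBC; exists 0, 1; rewrite scale1r add0r; split => //; left.
split.
- move=> x y [w [l [hw ->]]] [w' [l' [hw' ->]]]; exists (w + w'), (l + l'); split.
    by have := W0 w w' 1 hw hw'; rewrite scale1r.
  by rewrite scalerDl addrACA.
- move=> a x [w [l [hw ->]]]; exists (a *: w), (a * l); split.
    by have := W0 w 0 a hw (or_introl erefl); rewrite addr0.
  by rewrite scalerDr scalerA.
- move=> x [w [l [hw ->]]] [c hc].
  have [l0|ln0] := eqVneq l 0.
    move: hc; rewrite l0 scale0r addr0 => hc; case: hw => [->//|Cw].
    by apply: Cmeet => //; exists c.
  exfalso; apply: hu; exists (fun i => l^-1 * c i), ((- l^-1) *: w); split.
    by have := W0 w 0 (- l^-1) hw (or_introl erefl); rewrite addr0.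
  rewrite lincombZ -hc scalerDr scalerA mulVf // scale1r scaleNr.
  by rewrite addrC addKr.
Qed.

Lemma FE j : (j < size b)%N -> exists phi : U -> k,
  (forall (a : k) u u', phi (a *: u + u') = a * phi u + phi u') /\
  (forall i, (i < size b)%N -> phi b`_i = if i == j then 1 else 0).
Proof.
move=> hj; have [C [[Cadd Cscale Cmeet] dec]] := exC.
pose cf (u : U) : nat -> k := proj1_sig (cid (dec u)).
have cfP : forall u, exists w, (w = 0 \/ C w) /\ u = lincomb b (cf u) + w.
  by move=> u; rewrite /cf; case: (cid (dec u)).
have uniq : forall c c' w w', (w = 0 \/ C w) -> (w' = 0 \/ C w') ->
    lincomb b c + w = lincomb b c' + w' -> forall i, (i < size b)%N -> c i = c' i.
  move=> c c' w w' hw hw' e i hi; apply/eqP; rewrite -subr_eq0; apply/eqP.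
  apply: (hb (c := fun i => c i - c' i)) => //; rewrite lincombB.
  have e2 : lincomb b c - lincomb b c' = w' - w.
    have -> : lincomb b c = lincomb b c' + w' - w by rewrite -e addrK.
    by rewrite addrAC (addrAC (lincomb b c')) subrr add0r.
  rewrite e2; have : w' - w = 0 \/ C (w' - w).
    case: hw => [->|Cw]; case: hw' => [->|Cw']; rewrite ?subrr ?sub0r ?subr0; [by left | by right | |].
    - by right; rewrite -scaleN1r; apply: Cscale.
    - by right; apply: Cadd => //; rewrite -scaleN1r; apply: Cscale.
  case=> [->//|Cd]; apply: Cmeet => //; exists (fun i => c i - c' i); by rewrite lincombB.
exists (fun u => cf u j); split.
- move=> a u u'.
  have [w [hw eu]] := cfP u; have [w' [hw' eu']] := cfP u'; have [w'' [hw'' eu'']] := cfP (a *: u + u').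
  symmetry; apply: (uniq (fun i => a * cf u i + cf u' i) _ (a *: w + w') w'') => //.
    case: hw => [->|Cw]; case: hw' => [->|Cw']; rewrite ?scaler0 ?add0r ?addr0; [by left | by right | by right; apply: Cscale |].
    by right; apply: Cadd => //; apply: Cscale.
  rewrite -eu'' lincombD lincombZ {2}eu {2}eu' scalerDr.
  by rewrite addrACA.
- move=> i hi; have [w [hw e]] := cfP b`_i.
  rewrite eq_sym; apply: (uniq (cf b`_i) (fun l => if l == i then 1 else 0) w 0) => //; first by left.
  by rewrite addr0 lincomb_delta.  
Qed.
End FE.

Lemma SD (s : seq U) : exists b : seq U, exists lam : U -> nat -> k,
  [/\ indep b, (forall x, x \in b -> x \in s) & (forall a, a \in s -> a = lincomb b (lam a))].
Proof.
elim: s => [|a s [b [lam [hb hbs hs]]]].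
  by exists [::], (fun _ _ => 0); split => // x.
have [[c hc]|hn] := pselect (exists c, a = lincomb b c).
  exists b, (fun x => if x == a then c else lam x); split => //.
    by move=> x /hbs; rewrite inE => ->; rewrite orbT.
  move=> x; rewrite inE; case: (eqVneq x a) => [->//|_] /= /hs; done.
exists (rcons b a), (fun x i => if x == a then (if i == size b then 1 else 0) else if (i < size b)%N then lam x i else 0).
have lc_rcons : forall c, lincomb (rcons b a) c = lincomb b c + c (size b) *: a.
  move=> c; rewrite /lincomb size_rcons big_ord_recr /= nth_rcons ltnn eqxx; congr (_ + _).
  by apply: eq_bigr => i _; rewrite nth_rcons ltn_ord.
split.
- move=> c; rewrite lc_rcons => e i; rewrite size_rcons ltnS => hi.
  have cn : c (size b) = 0.
    apply: contrapT => /eqP cn; apply: hn; exists (fun i => - (c (size b))^-1 * c i).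
    rewrite lincombZ; apply: (@scalerI _ _ (c (size b))) => //.
    rewrite scalerA mulrN mulfV // scaleN1r; apply/eqP; by rewrite -addr_eq0 addrC e.
  move: hi; rewrite leq_eqVlt => /orP[/eqP ->//|hi].
  by apply: hb hi; move: e; rewrite cn scale0r addr0.
- by move=> x; rewrite mem_rcons !inE => /orP[->//|/hbs ->]; rewrite orbT.
- move=> x; rewrite inE lc_rcons; case: (eqVneq x a) => [->|nxa] /=.
    rewrite eqxx scale1r (_ : lincomb b _ = 0) ?add0r //.
    by rewrite /lincomb big1 // => i _; rewrite (ltn_eqF (ltn_ord i)) scale0r.
  move=> /hs {1}->; rewrite ltnn scale0r addr0 /lincomb; apply: eq_bigr => i _.
  by rewrite ltn_ord.
Qed.


Lemma phi_lincomb (phi : U -> k) (b : seq U) (c : nat -> k) j :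
  (forall (a : k) u u', phi (a *: u + u') = a * phi u + phi u') ->
  (forall i, (i < size b)%N -> phi b`_i = if i == j then 1 else 0) ->
  (j < size b)%N -> phi (lincomb b c) = c j.
Proof.
move=> hl hd hj.
have p0 : phi 0 = 0.
  have := hl 1 0 0; rewrite scale1r addr0 mul1r => h.
  by apply: (@addIr _ (phi 0)); rewrite add0r -h.
have pD : forall x y, phi (x + y) = phi x + phi y by move=> x y; rewrite -[x]scale1r hl mul1r scale1r.
have pZ : forall a x, phi (a *: x) = a * phi x by move=> a x; rewrite -[a *: x]addr0 hl p0 addr0.
have pS : forall (r : seq 'I_(size b)) (F : 'I_(size b) -> U), phi (\sum_(i <- r) F i) = \sum_(i <- r) phi (F i).
  by move=> r F; elim: r => [|x r IH]; rewrite ?big_nil ?p0 // !big_cons pD IH.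
rewrite /lincomb pS (bigD1 (Ordinal hj)) //= pZ hd // eqxx mulr1 big1 ?addr0 // => i hi.
rewrite pZ hd // ifF ?mulr0 //; apply/negbTE; move: hi; apply: contra => /eqP e.
by apply/eqP; apply: val_inj.
Qed.

End LA.


Section LinTac.
Variable k : fieldType.
Lemma lin_bil1 (U V W X : lmodType k) (f : U -> V -> W) (L : X -> U) v :
  bilinear2 f -> lin1 L -> lin1 (fun u => f (L u) v).
Proof. by move/bil2P=> [h _] hL; apply: (lin1_comp (F := fun u => f u v)). Qed.
Lemma lin_bil2 (U V W X : lmodType k) (f : U -> V -> W) (L : X -> V) u :
  bilinear2 f -> lin1 L -> lin1 (fun v => f u (L v)).
Proof. by move/bil2P=> [_ h] hL; apply: (lin1_comp (F := f u)). Qed.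
Lemma lin_tri1 (U V Y W X : lmodType k) (f : U -> V -> Y -> W) (L : X -> U) v y :
  trilinear3 f -> lin1 L -> lin1 (fun u => f (L u) v y).
Proof. by move/tri3P=> [h _ _] hL; apply: (lin1_comp (F := fun u => f u v y)). Qed.
Lemma lin_tri2 (U V Y W X : lmodType k) (f : U -> V -> Y -> W) (L : X -> V) u y :
  trilinear3 f -> lin1 L -> lin1 (fun v => f u (L v) y).
Proof. by move/tri3P=> [_ h _] hL; apply: (lin1_comp (F := fun v => f u v y)). Qed.
Lemma lin_tri3 (U V Y W X : lmodType k) (f : U -> V -> Y -> W) (L : X -> Y) u v :
  trilinear3 f -> lin1 L -> lin1 (fun y => f u v (L y)).
Proof. by move/tri3P=> [_ _ h] hL; apply: (lin1_comp (F := fun y => f u v y)). Qed.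
Lemma lin_q1 (U V Y Z W X : lmodType k) (f : U -> V -> Y -> Z -> W) (L : X -> U) v y z :
  quadlin4 f -> lin1 L -> lin1 (fun u => f (L u) v y z).
Proof. by move=> [h _ _ _] hL; apply: (lin1_comp (F := fun u => f u v y z)). Qed.
Lemma lin_q2 (U V Y Z W X : lmodType k) (f : U -> V -> Y -> Z -> W) (L : X -> V) u y z :
  quadlin4 f -> lin1 L -> lin1 (fun v => f u (L v) y z).
Proof. by move=> [_ h _ _] hL; apply: (lin1_comp (F := fun v => f u v y z)). Qed.
Lemma lin_q3 (U V Y Z W X : lmodType k) (f : U -> V -> Y -> Z -> W) (L : X -> Y) u v z :
  quadlin4 f -> lin1 L -> lin1 (fun y => f u v (L y) z).
Proof. by move=> [_ _ h _] hL; apply: (lin1_comp (F := fun y => f u v y z)). Qed.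
Lemma lin_q4 (U V Y Z W X : lmodType k) (f : U -> V -> Y -> Z -> W) (L : X -> Z) u v y :
  quadlin4 f -> lin1 L -> lin1 (fun z => f u v y (L z)).
Proof. by move=> [_ _ _ h] hL; apply: (lin1_comp (F := fun z => f u v y z)). Qed.
Lemma lin_mull_c (A : algType k) (X : lmodType k) (L : X -> A) b :
  lin1 L -> lin1 (fun u => b * L u).
Proof. by move=> hL; apply: (lin1_comp (F := fun y => b * y)) => //; apply: lin1_mull. Qed.
Lemma lin_mulr_c (A : algType k) (X : lmodType k) (L : X -> A) b :
  lin1 L -> lin1 (fun u => L u * b).
Proof. by move=> hL; apply: (lin1_comp (F := fun y => y * b)) => //; apply: lin1_mulr. Qed.
Lemma lin_opp_c (A X : lmodType k) (L : X -> A) :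
  lin1 L -> lin1 (fun u => - L u).
Proof. exact: lin1_oppf. Qed.
Lemma lin_sc_c (A X : lmodType k) (L : X -> A) c :
  lin1 L -> lin1 (fun u => c *: L u).
Proof. exact: lin1_scalef. Qed.
Lemma lin_sum2 (U W : lmodType k) (I : Type) (r : seq I) (G : U -> I -> W) :
  (forall i, lin1 (fun u => G u i)) -> lin1 (fun u => \sum_(i <- r) G u i).
Proof. exact: lin1_sumf. Qed.
Lemma bil2I (U V W : lmodType k) (f : U -> V -> W) :
  (forall v, lin1 (fun u => f u v)) -> (forall u, lin1 (fun v => f u v)) -> bilinear2 f.
Proof. by move=> h1 h2; apply/bil2P. Qed.
Lemma tri3I (U V X W : lmodType k) (f : U -> V -> X -> W) :
  (forall v x, lin1 (fun u => f u v x)) -> (forall u x, lin1 (fun v => f u v x)) ->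
  (forall u v, lin1 (fun x => f u v x)) -> trilinear3 f.
Proof. by move=> h1 h2 h3; apply/tri3P. Qed.
End LinTac.

Ltac lin_base :=
  first [ apply: lin1_id
        | apply: lin1_const0
        | apply: lin_sum2 => ?
        | apply: lin1_addf
        | apply: lin_opp_c
        | apply: lin_sc_c
        | apply: lin_mull_c
        | apply: lin_mulr_c
        | match goal with h : bilinear2 _ |- _ => first [apply: (lin_bil1 _ h) | apply: (lin_bil2 _ h)] end
        | match goal with h : trilinear3 _ |- _ => first [apply: (lin_tri1 _ _ h) | apply: (lin_tri2 _ _ h) | apply: (lin_tri3 _ _ h)] end
        | match goal with h : quadlin4 _ |- _ => first [apply: (lin_q1 _ _ _ h) | apply: (lin_q2 _ _ _ h) | apply: (lin_q3 _ _ _ h) | apply: (lin_q4 _ _ _ h)] end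
        | apply: bil2I => ?
        | apply: tri3I => ? ?
        ].
Ltac lin_hook := fail.
Ltac lin_solve := repeat (intros; cbn [fst snd]; first [lin_base | lin_hook]).

Section Main.
Variables (k : fieldType)
    (H : algType k) (Delta : H -> seq (H * H)) (eps : H -> k) (S : H -> H)
    (P : algType k) (DR : P -> seq (P * H))
    (V : lmodType k) (delta : V -> seq (V * H)) (theta : V -> seq (P * P))
    (omega : H -> seq (P * P)).

Hypothesis hDlin : tlinear Delta.
Hypothesis hDco : forall h, teq3 [seq (y.1, y.2, x.2) | x <- Delta h, y <- Delta x.1]
                      [seq (x.1, y.1, y.2) | x <- Delta h, y <- Delta x.2].
Hypothesis hepslin : forall (a : k) h g, eps (a *: h + g) = a * eps h + eps g.
Hypothesis hcoL : forall h, \sum_(x <- Delta h) eps x.1 *: x.2 = h.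
Hypothesis hSlin : forall (a : k) h g, S (a *: h + g) = a *: S h + S g.
Hypothesis hantiL : forall h, \sum_(x <- Delta h) S x.1 * x.2 = eps h *: 1.
Hypothesis hantiR : forall h, \sum_(x <- Delta h) x.1 * S x.2 = eps h *: 1.
Hypothesis hDRlin : tlinear DR.
Hypothesis hDRco : forall v, teq3 [seq (y.1, y.2, x.2) | x <- DR v, y <- DR x.1]
                      [seq (x.1, y.1, y.2) | x <- DR v, y <- Delta x.2].
Hypothesis hDRmul : forall p q, teq2 (DR (p * q))
          [seq (x.1 * y.1, x.2 * y.2) | x <- DR p, y <- DR q].
Hypothesis hDR1 : teq2 (DR 1) [:: (1, 1)].
Hypothesis hthlin : tlinear theta.
Hypothesis hthOm : forall v, inOmega1 (theta v).
Hypothesis hthEq : forall v, teq3 (coactPP DR (theta v))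
                      [seq (y.1, y.2, x.2) | x <- delta v, y <- theta x.1].
Hypothesis hthPOM : forall v, inPOmega1M (coinv DR) (theta v).
Hypothesis hsinj : forall t t', in_E DR delta t -> in_E DR delta t' ->
   teq2 (s_theta theta t) (s_theta theta t') -> teq2 t t'.
Hypothesis homlin : tlinear omega.
Hypothesis homOm : forall h, inOmega1 (omega h).
Hypothesis hom1 : tzero2 (omega 1).
Hypothesis homEq : forall h, teq3 (coactPP DR (omega h))
          (flatten [seq [seq (z.1, z.2, S y.1 * x.2) | y <- Delta x.1, z <- omega y.2]
                   | x <- Delta h]).
Hypothesis hLS : left_strong DR omega.

Lemma lin_S (X : lmodType k) (L : X -> H) : lin1 L -> lin1 (fun u => S (L u)).
Proof. by move=> hL; apply: (lin1_comp (F := S)) => // a u u'; apply: hSlin. Qed.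
Lemma lin_eps (W X : lmodType k) (L : X -> H) (w : W) : lin1 L -> lin1 (fun u => eps (L u) *: w).
Proof. move=> hL; apply: (lin1_comp (F := fun h => eps h *: w)) => //.
by apply: lin1_scalv. Qed.
Lemma lin_DR (W X : lmodType k) (L : X -> P) (G : P * H -> W) :
  bilinear2 (fun a b => G (a, b)) -> lin1 L -> lin1 (fun u => \sum_(x <- DR (L u)) G x).
Proof. move=> hg hL; apply: (lin1_comp (F := fun p => \sum_(x <- DR p) G x)) => //.
move/tlinearP: hDRlin => /(_ _ _ hg) h a u u'.
have e : forall q, \sum_(x <- DR q) G x = \sum_(x <- DR q) G (x.1, x.2).
  by move=> q; apply: eq_bigr => -[].
by rewrite !e h. Qed.
Lemma lin_Delta (W X : lmodType k) (L : X -> H) (G : H * H -> W) :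
  bilinear2 (fun a b => G (a, b)) -> lin1 L -> lin1 (fun u => \sum_(x <- Delta (L u)) G x).
Proof. move=> hg hL; apply: (lin1_comp (F := fun p => \sum_(x <- Delta p) G x)) => //.
move/tlinearP: hDlin => /(_ _ _ hg) h a u u'.
have e : forall q, \sum_(x <- Delta q) G x = \sum_(x <- Delta q) G (x.1, x.2).
  by move=> q; apply: eq_bigr => -[].
by rewrite !e h. Qed.
Lemma lin_om (W X : lmodType k) (L : X -> H) (G : P * P -> W) :
  bilinear2 (fun a b => G (a, b)) -> lin1 L -> lin1 (fun u => \sum_(x <- omega (L u)) G x).
Proof. move=> hg hL; apply: (lin1_comp (F := fun p => \sum_(x <- omega p) G x)) => //.
move/tlinearP: homlin => /(_ _ _ hg) h a u u'.
have e : forall q, \sum_(x <- omega q) G x = \sum_(x <- omega q) G (x.1, x.2).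
  by move=> q; apply: eq_bigr => -[].
by rewrite !e h. Qed.
Lemma lin_th (W X : lmodType k) (L : X -> V) (G : P * P -> W) :
  bilinear2 (fun a b => G (a, b)) -> lin1 L -> lin1 (fun u => \sum_(x <- theta (L u)) G x).
Proof. move=> hg hL; apply: (lin1_comp (F := fun p => \sum_(x <- theta p) G x)) => //.
move/tlinearP: hthlin => /(_ _ _ hg) h a u u'.
have e : forall q, \sum_(x <- theta q) G x = \sum_(x <- theta q) G (x.1, x.2).
  by move=> q; apply: eq_bigr => -[].
by rewrite !e h. Qed.

Ltac lin_hook ::= first [ apply: lin_S | apply: lin_eps | apply: lin_DR | apply: lin_Delta
                        | apply: lin_om | apply: lin_th ].


Lemma teq2E (U1 U2 W : lmodType k) (s t : seq (U1 * U2)) (f : U1 -> U2 -> W) :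
  teq2 s t -> bilinear2 f -> \sum_(x <- s) f x.1 x.2 = \sum_(x <- t) f x.1 x.2.
Proof. by move/teq2P=> h hf; apply: h. Qed.
Lemma teq3E (U1 U2 U3 W : lmodType k) (s t : seq (U1 * U2 * U3)) (f : U1 -> U2 -> U3 -> W) :
  teq3 s t -> trilinear3 f -> \sum_(x <- s) f x.1.1 x.1.2 x.2 = \sum_(x <- t) f x.1.1 x.1.2 x.2.
Proof. by move/teq3P=> h hf; apply: h. Qed.

Lemma sum_allpairs (A B C : Type) (W : zmodType) (s : seq A) (t : A -> seq B) (h : A -> B -> C) (F : C -> W) :
  \sum_(x <- [seq h a b | a <- s, b <- t a]) F x = \sum_(a <- s) \sum_(b <- t a) F (h a b).
Proof. by rewrite big_allpairs_dep. Qed.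
Lemma sum_flatmap (A C : Type) (W : zmodType) (s : seq A) (t : A -> seq C) (F : C -> W) :
  \sum_(x <- flatten [seq t a | a <- s]) F x = \sum_(a <- s) \sum_(x <- t a) F x.
Proof. by rewrite big_flatten big_map. Qed.
Lemma sum_flatallpairs (A B C : Type) (W : zmodType) (s : seq A) (t : A -> seq B) (h : A -> B -> seq C) (F : C -> W) :
  \sum_(x <- flatten [seq h a b | a <- s, b <- t a]) F x = \sum_(a <- s) \sum_(b <- t a) \sum_(x <- h a b) F x.
Proof. by rewrite big_flatten big_allpairs_dep. Qed.
Lemma sum_coactPP (W : zmodType) (s : seq (P * P)) (F : P * P * H -> W) :
  \sum_(x <- coactPP DR s) F x = \sum_(x <- s) \sum_(y <- DR x.1) \sum_(z <- DR x.2) F (y.1, z.1, y.2 * z.2).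
Proof. rewrite /coactPP sum_flatmap; apply: eq_bigr => x _; by rewrite sum_allpairs. Qed.

Ltac sums := rewrite ?big_cat ?big_allpairs_dep ?big_flatten /= ?big_allpairs_dep ?big_map /= ?big_cons ?big_nil /= ?addr0.

Lemma evDR1 (W : lmodType k) (g : P -> H -> W) : bilinear2 g ->
  \sum_(x <- DR 1) g x.1 x.2 = g 1 1.
Proof. by move=> hg; rewrite (teq2E hDR1 hg); sums. Qed.
Lemma evDRmul (W : lmodType k) (g : P -> H -> W) p q : bilinear2 g ->
  \sum_(x <- DR (p * q)) g x.1 x.2 = \sum_(x <- DR p) \sum_(y <- DR q) g (x.1 * y.1) (x.2 * y.2).
Proof. by move=> hg; rewrite (teq2E (hDRmul p q) hg); sums. Qed.
Lemma evDRco (W : lmodType k) (f : P -> H -> H -> W) p : trilinear3 f ->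
  \sum_(x <- DR p) \sum_(y <- DR x.1) f y.1 y.2 x.2 = \sum_(x <- DR p) \sum_(y <- Delta x.2) f x.1 y.1 y.2.
Proof. by move=> hf; move: (teq3E (hDRco p) hf); sums. Qed.
Lemma evDco (W : lmodType k) (f : H -> H -> H -> W) p : trilinear3 f ->
  \sum_(x <- Delta p) \sum_(y <- Delta x.1) f y.1 y.2 x.2 = \sum_(x <- Delta p) \sum_(y <- Delta x.2) f x.1 y.1 y.2.
Proof. by move=> hf; move: (teq3E (hDco p) hf); sums. Qed.
Lemma evcoinv (W : lmodType k) (g : P -> H -> W) m : coinv DR m -> bilinear2 g ->
  \sum_(x <- DR m) g x.1 x.2 = g m 1.
Proof. by move=> hm hg; rewrite (teq2E hm hg); sums. Qed.
Lemma evom1 (W : lmodType k) (g : P -> P -> W) : bilinear2 g ->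
  \sum_(x <- omega 1) g x.1 x.2 = 0.
Proof. by move=> hg; apply: hom1. Qed.
Lemma evomEq (W : lmodType k) (f : P -> P -> H -> W) h : trilinear3 f ->
  \sum_(x <- omega h) \sum_(y <- DR x.1) \sum_(z <- DR x.2) f y.1 z.1 (y.2 * z.2) =
  \sum_(x <- Delta h) \sum_(y <- Delta x.1) \sum_(z <- omega y.2) f z.1 z.2 (S y.1 * x.2).
Proof. move=> hf; move: (teq3E (homEq h) hf); rewrite sum_coactPP sum_flatmap /= => ->.
by apply: eq_bigr => x _; rewrite sum_allpairs. Qed.
Lemma evthEq (W : lmodType k) (f : P -> P -> H -> W) v : trilinear3 f ->
  \sum_(x <- theta v) \sum_(y <- DR x.1) \sum_(z <- DR x.2) f y.1 z.1 (y.2 * z.2) =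
  \sum_(x <- delta v) \sum_(y <- theta x.1) f y.1 y.2 x.2.
Proof. by move=> hf; move: (teq3E (hthEq v) hf); rewrite sum_coactPP sum_allpairs. Qed.
Lemma evE (W : lmodType k) (f : P -> V -> H -> W) t : in_E DR delta t -> trilinear3 f ->
  \sum_(x <- t) \sum_(y <- DR x.1) \sum_(z <- delta x.2) f y.1 z.1 (y.2 * z.2) =
  \sum_(x <- t) f x.1 x.2 1.
Proof. move=> hE hf; move: (teq3E hE hf); rewrite sum_flatmap big_map /= => <-.
by apply: eq_bigr => x _; rewrite sum_allpairs. Qed.


Lemma lin1_ext (X W : lmodType k) (F F' : X -> W) : (forall u, F u = F' u) -> lin1 F' -> lin1 F.
Proof. by move=> e h a u u'; rewrite !e. Qed.

Lemma HI (W : lmodType k) (Phi : H -> H -> W) h0 : bilinear2 Phi ->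
  \sum_(y <- Delta h0) \sum_(x <- Delta y.2) \sum_(y' <- Delta x.1) Phi (y.1 * S y'.1 * x.2) y'.2
  = \sum_(y <- Delta h0) Phi y.2 y.1.
Proof.
move=> hP.
transitivity (\sum_(y <- Delta h0) \sum_(x <- Delta y.2) \sum_(y' <- Delta x.2) Phi (y.1 * S x.1 * y'.2) y'.1).
  apply: eq_bigr => y _.
  have := @evDco _ (fun a b c => Phi (y.1 * S a * c) b) y.2; apply; lin_solve.
transitivity (\sum_(x <- Delta h0) \sum_(y <- Delta x.1) \sum_(y' <- Delta x.2) Phi (y.1 * S y.2 * y'.2) y'.1).
  symmetry; have := @evDco _ (fun a b g => \sum_(y' <- Delta g) Phi (a * S b * y'.2) y'.1) h0; apply; lin_solve.
have L : lin1 (fun g => \sum_(y' <- Delta g) Phi y'.2 y'.1) by lin_solve.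
transitivity (\sum_(x <- Delta h0) eps x.1 *: \sum_(y' <- Delta x.2) Phi y'.2 y'.1).
  apply: eq_bigr => x _; rewrite exchange_big /= scaler_sumr; apply: eq_bigr => y' _.
  have L2 : lin1 (fun u => Phi (u * y'.2) y'.1) by lin_solve.
  rewrite -(lin1_sum L2) /=.
  by rewrite hantiR (lin1_Z L2) /= mul1r.
rewrite (eq_bigr (fun x => (fun g => \sum_(y' <- Delta g) Phi y'.2 y'.1) (eps x.1 *: x.2))).
  by rewrite -(lin1_sum L) hcoL.
by move=> x _; rewrite (lin1_Z L).
Qed.


Lemma DcovE (W : lmodType k) (G : P -> P -> W) p : bilinear2 G ->
  \sum_(z <- Dcov DR omega p) G z.1 z.2 =
  G 1 p + G (- p) 1 - \sum_(y <- DR p) \sum_(z <- omega y.2) G (y.1 * z.1) z.2.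
Proof.
move=> hG; rewrite /Dcov big_cat /= /dP !big_cons big_nil /= addr0 (sum_neg2 _ hG).
congr (_ - _); rewrite /Pi_omega sum_flatallpairs !big_cons big_nil addr0 /=.
have -> : \sum_(b <- DR 1) \sum_(x <- lmul (- p * b.1) (omega b.2)) G x.1 x.2 = 0.
  rewrite (eq_bigr (fun b => \sum_(z <- omega b.2) G (- p * b.1 * z.1) z.2)); last by move=> *; rewrite big_map.
  rewrite (@evDR1 _ (fun a h => \sum_(z <- omega h) G (- p * a * z.1) z.2)); last by lin_solve.
  by apply: (@evom1 _ (fun a b => G (- p * 1 * a) b)); lin_solve.
rewrite addr0; apply: eq_bigr => y _; rewrite big_map; apply: eq_bigr => z _ /=; by rewrite mul1r.
Qed.

Lemma lin_Dcov (W X : lmodType k) (L : X -> P) (G : P * P -> W) :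
  bilinear2 (fun a b => G (a, b)) -> lin1 L -> lin1 (fun u => \sum_(x <- Dcov DR omega (L u)) G x).
Proof.
move=> hG hL; apply: (lin1_comp (F := fun p => \sum_(x <- Dcov DR omega p) G x)) => //.
apply: (lin1_ext (F' := fun p => G (1, p) + G (- p, 1) - \sum_(y <- DR p) \sum_(z <- omega y.2) G (y.1 * z.1, z.2))).
  move=> p; rewrite -(DcovE p hG); by apply: eq_bigr => -[].
apply: lin1_addf; first apply: lin1_addf.
- by move/bil2P: hG => [_ h]; apply: h.
- by apply: (lin1_comp (F := fun a => G (a, 1))); [move/bil2P: hG => [h _]; apply: h | lin_solve].
- lin_solve.
Qed.

Ltac lin_hook ::= first [ apply: lin_S | apply: lin_eps | apply: lin_DR | apply: lin_Delta
                        | apply: lin_om | apply: lin_th | apply: lin_Dcov ].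

Lemma EQD (W : lmodType k) (F : P -> P -> H -> W) p : trilinear3 F ->
  \sum_(x <- Dcov DR omega p) \sum_(y <- DR x.1) \sum_(z <- DR x.2) F y.1 z.1 (y.2 * z.2)
  = \sum_(y <- DR p) \sum_(z <- Dcov DR omega y.1) F z.1 z.2 y.2.
Proof.
move=> hF.
rewrite (@DcovE _ (fun a b => \sum_(y <- DR a) \sum_(z <- DR b) F y.1 z.1 (y.2 * z.2))); last by lin_solve.
rewrite [RHS](eq_bigr (fun y => F 1 y.1 y.2 + F (- y.1) 1 y.2 -
     \sum_(y' <- DR y.1) \sum_(z <- omega y'.2) F (y'.1 * z.1) z.2 y.2)); last first.
  by move=> y _; rewrite (@DcovE _ (fun a b => F a b y.2)) //; lin_solve.
rewrite sumrB big_split /=; congr (_ + _ - _).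
- rewrite (@evDR1 _ (fun a h => \sum_(z <- DR p) F a z.1 (h * z.2))); last by lin_solve.
  by apply: eq_bigr => z _; rewrite mul1r.
- rewrite (eq_bigr (fun y => F y.1 1 (y.2 * 1))); last first.
    by move=> y _; rewrite (@evDR1 _ (fun b h => F y.1 b (y.2 * h))) //; lin_solve.
  have L1 : lin1 (fun q => \sum_(y <- DR q) F y.1 1 (y.2 * 1)) by lin_solve.
  rewrite (lin1_N L1) -sumrN; apply: eq_bigr => y _; rewrite mulr1.
  by move/tri3P: hF => [h _ _]; rewrite (lin1_N (h _ _)).
transitivity (\sum_(y <- DR p) \sum_(a <- DR y.1) \sum_(x <- Delta y.2) \sum_(y' <- Delta x.1) \sum_(z <- omega y'.2)
    F (a.1 * z.1) z.2 (a.2 * (S y'.1 * x.2))).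
  apply: eq_bigr => y _.
  transitivity (\sum_(z <- omega y.2) \sum_(a <- DR y.1) \sum_(a' <- DR z.1) \sum_(b <- DR z.2)
      F (a.1 * a'.1) b.1 (a.2 * (a'.2 * b.2))).
    apply: eq_bigr => z _.
    rewrite (@evDRmul _ (fun a h => \sum_(b <- DR z.2) F a b.1 (h * b.2))); last by lin_solve.
    by apply: eq_bigr => a _; apply: eq_bigr => a' _; apply: eq_bigr => b _; rewrite mulrA.
  rewrite exchange_big /=; apply: eq_bigr => a _.
  by apply: (@evomEq _ (fun u v h => F (a.1 * u) v (a.2 * h))); lin_solve.
rewrite (@evDRco _ (fun a kk g => \sum_(x <- Delta g) \sum_(y' <- Delta x.1) \sum_(z <- omega y'.2)
    F (a * z.1) z.2 (kk * (S y'.1 * x.2)))); last by lin_solve.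
rewrite (@evDRco _ (fun a g h => \sum_(z <- omega g) F (a * z.1) z.2 h)); last by lin_solve.
apply: eq_bigr => x _.
rewrite -(@HI _ (fun u g => \sum_(z <- omega g) F (x.1 * z.1) z.2 u)); last by lin_solve.
apply: eq_bigr => y _; apply: eq_bigr => x' _; apply: eq_bigr => y' _; apply: eq_bigr => z _.
by rewrite mulrA.
Qed.


Lemma sum_mul11 (W : zmodType) (s t : seq (P * P)) (F : P * P * P -> W) :
  \sum_(x <- mul11 s t) F x = \sum_(a <- s) \sum_(b <- t) F (a.1, a.2 * b.1, b.2).
Proof. by rewrite /mul11 sum_allpairs. Qed.
Lemma sum_nabla (W : zmodType) (t : seq (P * V)) (F : P * P * P -> W) :
  \sum_(x <- nabla_rep DR theta omega t) F x =
  \sum_(x <- t) \sum_(a <- Dcov DR omega x.1) \sum_(b <- theta x.2) F (a.1, a.2 * b.1, b.2).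
Proof. rewrite /nabla_rep sum_flatmap; apply: eq_bigr => x _; by rewrite sum_mul11. Qed.

Definition co3 (W : lmodType k) (f : P -> P -> P -> H -> W) (a b c : P) : W :=
  \sum_(y <- DR a) \sum_(z <- DR b) \sum_(u <- DR c) f y.1 z.1 u.1 (y.2 * z.2 * u.2).

Lemma INV (W : lmodType k) (f : P -> P -> P -> H -> W) t : quadlin4 f -> in_E DR delta t ->
  \sum_(n <- nabla_rep DR theta omega t) co3 f n.1.1 n.1.2 n.2 =
  \sum_(n <- nabla_rep DR theta omega t) f n.1.1 n.1.2 n.2 1.
Proof.
move=> hf hE; rewrite !sum_nabla /co3 /=.
transitivity (\sum_(x <- t) \sum_(y <- DR x.1) \sum_(w <- delta x.2)
   (fun p v h => \sum_(a <- Dcov DR omega p) \sum_(b <- theta v) f a.1 (a.2 * b.1) b.2 h) y.1 w.1 (y.2 * w.2)); last first.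
  by apply: (@evE _ (fun p v h => \sum_(a <- Dcov DR omega p) \sum_(b <- theta v) f a.1 (a.2 * b.1) b.2 h)) => //; lin_solve.
apply: eq_bigr => x _ /=.
pose Psi a' b' h := \sum_(b <- theta x.2) \sum_(z' <- DR b.1) \sum_(u <- DR b.2) f a' (b' * z'.1) u.1 (h * (z'.2 * u.2)).
transitivity (\sum_(a <- Dcov DR omega x.1) \sum_(y <- DR a.1) \sum_(z <- DR a.2) Psi y.1 z.1 (y.2 * z.2)).
  apply: eq_bigr => a _; rewrite /Psi exchange_big /=; apply: eq_bigr => y _.
  rewrite [RHS]exchange_big /=; apply: eq_bigr => b _.
  rewrite (@evDRmul _ (fun c h => \sum_(u <- DR b.2) f y.1 c u.1 (y.2 * h * u.2))); last by lin_solve.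
  apply: eq_bigr => z _; apply: eq_bigr => z' _; apply: eq_bigr => u _.
  by rewrite !mulrA.
rewrite (@EQD _ Psi); last by rewrite /Psi; lin_solve.
apply: eq_bigr => y _; rewrite [RHS]exchange_big /=; apply: eq_bigr => a _; rewrite /Psi.
rewrite (@evthEq _ (fun c d h' => f a.1 (a.2 * c) d (y.2 * h'))); last by lin_solve.
done.
Qed.


Lemma tri_expand (W : lmodType k) (F : P -> P -> P -> W) (b d : seq P) (c1 c2 : nat -> k) x :
  trilinear3 F ->
  F (lincomb b c1) x (lincomb d c2) =
  \sum_(j < size b) \sum_(l < size d) (c1 j * c2 l) *: F b`_j x d`_l.
Proof.
move/tri3P=> [h1 _ h3]; rewrite /lincomb (lin1_sum (h1 _ _)) /=; apply: eq_bigr => j _.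
rewrite (lin1_Z (h1 _ _)) /= (lin1_sum (h3 _ _)) /= scaler_sumr; apply: eq_bigr => l _.
by rewrite (lin1_Z (h3 _ _)) /= scalerA.
Qed.

Lemma DESC (L : seq (P * P * P)) :
  (forall e, e \in L -> coinv DR e.1.1 /\ coinv DR e.2) ->
  (forall (W : lmodType k) (f : P -> P -> P -> H -> W), quadlin4 f ->
     \sum_(e <- L) \sum_(z <- DR e.1.2) f e.1.1 z.1 e.2 z.2 = \sum_(e <- L) f e.1.1 e.1.2 e.2 1) ->
  exists L' : seq (P * P * P), teq3 L L' /\
     forall e, e \in L' -> [/\ coinv DR e.1.1, coinv DR e.1.2 & coinv DR e.2].
Proof.
move=> hL hinv.
have [b [lam [hb hbs hsb]]] := SD [seq e.1.1 | e <- L].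
have [d [mu [hd hds hsd]]] := SD [seq e.2 | e <- L].
pose Q (j l : nat) := \sum_(e <- L) (lam e.1.1 j * mu e.2 l) *: e.1.2.
exists [seq (b`_j, Q j l, d`_l) | j <- index_iota 0 (size b), l <- index_iota 0 (size d)].
split.
- apply/teq3P => W F hF; rewrite sum_allpairs /=.
  transitivity (\sum_(e <- L) \sum_(j < size b) \sum_(l < size d) (lam e.1.1 j * mu e.2 l) *: F b`_j e.1.2 d`_l).
    apply: eq_big_seq => e he.
    rewrite {1}(hsb e.1.1); last by apply/mapP; exists e.
    rewrite {1}(hsd e.2); last by apply/mapP; exists e.
    by rewrite tri_expand.
  rewrite exchange_big big_mkord; apply: eq_bigr => j _; rewrite exchange_big big_mkord; apply: eq_bigr => l _.
  move/tri3P: hF => [_ h2 _]; rewrite /Q (lin1_sum (h2 _ _)) /=; apply: eq_bigr => e _.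
  by rewrite (lin1_Z (h2 _ _)).
move=> e0 /allpairsPdep [j [l [hj hl ->]]] /=.
move: hj hl; rewrite !mem_index_iota /= => hj hl.
have cb : coinv DR b`_j.
  have /hbs /mapP [e' he' ->] : b`_j \in b by apply: mem_nth.
  by have [] := hL e' he'.
have cd : coinv DR d`_l.
  have /hds /mapP [e' he' ->] : d`_l \in d by apply: mem_nth.
  by have [] := hL e' he'.
split => //.
have [phi [phil phid]] := FE hb hj.
have [psi [psil psid]] := FE hd hl.
apply/teq2P => W g hg; rewrite big_cons big_nil addr0 /=.
have Lg : lin1 (fun p => \sum_(z <- DR p) g z.1 z.2) by lin_solve.
have Lg1 : lin1 (fun p => g p 1) by lin_solve.
rewrite /Q (lin1_sum Lg) (lin1_sum Lg1) /=.
rewrite (eq_big_seq (fun e => (phi e.1.1 * psi e.2) *: \sum_(z <- DR e.1.2) g z.1 z.2)); last first.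
  move=> e he; rewrite (lin1_Z Lg) /=; congr (_ *: _).
  have -> : phi e.1.1 = lam e.1.1 j.
    by rewrite {1}(hsb e.1.1) ?(phi_lincomb _ phil phid hj) //; apply/mapP; exists e.
  have -> : psi e.2 = mu e.2 l.
    by rewrite {1}(hsd e.2) ?(phi_lincomb _ psil psid hl) //; apply/mapP; exists e.
  done.
rewrite [RHS](eq_big_seq (fun e => (phi e.1.1 * psi e.2) *: g e.1.2 1)); last first.
  move=> e he; rewrite (lin1_Z Lg1) /=; congr (_ *: _).
  have -> : phi e.1.1 = lam e.1.1 j.
    by rewrite {1}(hsb e.1.1) ?(phi_lincomb _ phil phid hj) //; apply/mapP; exists e.
  have -> : psi e.2 = mu e.2 l.
    by rewrite {1}(hsd e.2) ?(phi_lincomb _ psil psid hl) //; apply/mapP; exists e.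
  done.
have := hinv W (fun a x c h => (phi a * psi c) *: g x h).
rewrite (eq_bigr (fun e => (phi e.1.1 * psi e.2) *: \sum_(z <- DR e.1.2) g z.1 z.2)); last first.
  by move=> e _; rewrite scaler_sumr.
apply; split.
- by move=> v x y a u u'; rewrite phil mulrDl scalerDl scalerA mulrA.
- move=> u x y; apply: lin_sc_c; by move/bil2P: hg => [h _]; apply: h.
- by move=> u v y a x x'; rewrite psil mulrDr scalerDl scalerA mulrCA.
- move=> u v x; apply: lin_sc_c; by move/bil2P: hg => [_ h]; apply: h.
Qed.


Lemma teq2_cat (s1 s2 t1 t2 : seq (P * P)) : teq2 s1 t1 -> teq2 s2 t2 -> teq2 (s1 ++ s2) (t1 ++ t2).
Proof. move=> h1 h2; apply/teq2P => W g hg; by rewrite !big_cat /= (teq2E h1 hg) (teq2E h2 hg). Qed.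
Lemma teq3_cat (s1 s2 t1 t2 : seq (P * P * P)) : teq3 s1 t1 -> teq3 s2 t2 -> teq3 (s1 ++ s2) (t1 ++ t2).
Proof. move=> h1 h2; apply/teq3P => W g hg; by rewrite !big_cat /= (teq3E h1 hg) (teq3E h2 hg). Qed.
Lemma teq2_rmul (s t : seq (P * P)) q : teq2 s t -> teq2 (rmul s q) (rmul t q).
Proof. move=> h; apply/teq2P => W g hg; rewrite !big_map /=.
by apply: (@teq2E _ _ _ _ _ (fun a b => g a (b * q))) => //; lin_solve. Qed.
Lemma teq2_lmul (s t : seq (P * P)) q : teq2 s t -> teq2 (lmul q s) (lmul q t).
Proof. move=> h; apply/teq2P => W g hg; rewrite !big_map /=.
by apply: (@teq2E _ _ _ _ _ (fun a b => g (q * a) b)) => //; lin_solve. Qed.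
Lemma teq3_mul11 (s s' t t' : seq (P * P)) : teq2 s s' -> teq2 t t' -> teq3 (mul11 s t) (mul11 s' t').
Proof.
move=> h1 h2; apply/teq3P => W F hF; rewrite !sum_mul11.
rewrite (teq2E h1 (f := fun a b => \sum_(y <- t) F a (b * y.1) y.2)); last by lin_solve.
apply: eq_bigr => x _.
by apply: (teq2E h2 (f := fun a b => F x.1 (x.2 * a) b)); lin_solve.
Qed.

Lemma repL p : exists A : seq (P * P), teq2 (Dcov DR omega p) A /\ forall e, e \in A -> coinv DR e.1.
Proof.
have [l [hl he]] := hLS p.
suff [A [h1 h2]] : exists A : seq (P * P), teq2 (flatten [seq rmul x.1 x.2 | x <- l]) A /\ forall e, e \in A -> coinv DR e.1.
  by exists A; split => //; apply: teq2_trans h1.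
elim: l hl {he} => [|x l IH] hl; first by exists [::]; split => //; apply: teq2_refl.
have [hx1 [s' hs' hss']] := hl x (mem_head _ _).
have [A [hA1 hA2]] := IH (fun y hy => hl y (@mem_behead _ (x :: l) y hy)).
exists (rmul s' x.2 ++ A); split.
  by rewrite /= ; apply: teq2_cat => //; apply: teq2_rmul.
move=> e; rewrite mem_cat => /orP [/mapP [y hy ->]|/hA2 //].
by have [] := hs' y hy.
Qed.

Lemma repR v : exists B : seq (P * P), teq2 (theta v) B /\ forall e, e \in B -> coinv DR e.2.
Proof.
have [l [hl he]] := hthPOM v.
suff [A [h1 h2]] : exists A : seq (P * P), teq2 (flatten [seq lmul x.1 x.2 | x <- l]) A /\ forall e, e \in A -> coinv DR e.2.
  by exists A; split => //; apply: teq2_trans h1.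
elim: l hl {he} => [|x l IH] hl; first by exists [::]; split => //; apply: teq2_refl.
have [hx1 [s' hs' hss']] := hl x (mem_head _ _).
have [A [hA1 hA2]] := IH (fun y hy => hl y (@mem_behead _ (x :: l) y hy)).
exists (lmul x.1 s' ++ A); split.
  by rewrite /= ; apply: teq2_cat => //; apply: teq2_lmul.
move=> e; rewrite mem_cat => /orP [/mapP [y hy ->]|/hA2 //].
by have [] := hs' y hy.
Qed.

Lemma repN t : exists L : seq (P * P * P), teq3 (nabla_rep DR theta omega t) L /\
   forall e, e \in L -> coinv DR e.1.1 /\ coinv DR e.2.
Proof.
elim: t => [|x t [L [hL1 hL2]]]; first by exists [::]; split => //; apply: teq3_refl.
have [A [hA1 hA2]] := repL x.1; have [B [hB1 hB2]] := repR x.2.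
exists (mul11 A B ++ L); split.
  by rewrite /nabla_rep /=; apply: teq3_cat => //; apply: teq3_mul11.
move=> e; rewrite mem_cat => /orP [/allpairsPdep [a [b [ha hb ->]]]|/hL2 //] /=.
by split; [apply: hA2 | apply: hB2].
Qed.

Lemma coinv_mul a b : coinv DR a -> coinv DR b -> coinv DR (a * b).
Proof.
move=> ha hb; apply/teq2P => W g hg; rewrite big_cons big_nil addr0 /=.
rewrite evDRmul //.
rewrite (@evcoinv _ (fun y1 y2 => \sum_(z <- DR b) g (y1 * z.1) (y2 * z.2))) //; last by lin_solve.
rewrite (@evcoinv _ (fun z1 z2 => g (a * z1) (1 * z2))) //; last by lin_solve.
by rewrite mulr1.
Qed.
Lemma coinv_opp a : coinv DR a -> coinv DR (- a).
Proof.
move=> ha; apply/teq2P => W g hg; rewrite big_cons big_nil addr0 /=.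
have L : lin1 (fun p => \sum_(z <- DR p) g z.1 z.2) by lin_solve.
rewrite (lin1_N L) /= evcoinv //.
by move/bil2P: hg => [h _]; rewrite (lin1_N (h _)).
Qed.
Lemma coinv1 : coinv DR 1.
Proof. exact: hDR1. Qed.

Lemma mu2_Dcov p : \sum_(a <- Dcov DR omega p) a.1 * a.2 = 0.
Proof.
rewrite (@DcovE _ (fun a b => a * b)); last by lin_solve.
rewrite mul1r mulr1 subrr sub0r big1 ?oppr0 // => y _.
have := homOm y.2; rewrite /inOmega1 /mu2 => h0.
rewrite (eq_bigr (fun z => y.1 * (z.1 * z.2))); last by move=> z _; rewrite mulrA.
by rewrite -mulr_sumr h0 mulr0.
Qed.

Lemma mu12_N (W : lmodType k) (g : P -> P -> W) t : bilinear2 g ->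
  \sum_(e <- nabla_rep DR theta omega t) g (e.1.1 * e.1.2) e.2 = 0.
Proof.
move=> hg; rewrite sum_nabla big1 // => x _ /=; rewrite exchange_big /= big1 // => b _.
have L : lin1 (fun u => g (u * b.1) b.2) by lin_solve.
rewrite (eq_bigr (fun a => g (a.1 * a.2 * b.1) b.2)); last by move=> a _; rewrite mulrA.
by rewrite -(lin1_sum L) /= mu2_Dcov (lin1_0 L).
Qed.

Lemma mu23_N (W : lmodType k) (g : P -> P -> W) t : bilinear2 g ->
  \sum_(e <- nabla_rep DR theta omega t) g e.1.1 (e.1.2 * e.2) = 0.
Proof.
move=> hg; rewrite sum_nabla big1 // => x _ /=; rewrite big1 // => a _.
have L : lin1 (fun u => g a.1 (a.2 * u)) by lin_solve.
rewrite (eq_bigr (fun b => g a.1 (a.2 * (b.1 * b.2)))); last by move=> b _; rewrite mulrA.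
by rewrite -(lin1_sum L) /=; have := hthOm x.2; rewrite /inOmega1 /mu2 => ->; rewrite (lin1_0 L).
Qed.

Lemma Omega2 t : in_E DR delta t -> inOmega2M (coinv DR) (nabla_rep DR theta omega t).
Proof.
move=> hE.
have [L [hNL hLc]] := repN t.
have invL : forall (W : lmodType k) (f : P -> P -> P -> H -> W), quadlin4 f ->
     \sum_(e <- L) \sum_(z <- DR e.1.2) f e.1.1 z.1 e.2 z.2 = \sum_(e <- L) f e.1.1 e.1.2 e.2 1.
  move=> W f hf.
  have := INV hf hE.
  rewrite (teq3E hNL (f := co3 f)); last by rewrite /co3; lin_solve.
  rewrite (teq3E hNL (f := fun a b c => f a b c 1)); last by lin_solve.
  move=> <-; apply: eq_big_seq => e he; rewrite /co3.
  have [c1 c2] := hLc e he.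
  rewrite (@evcoinv _ (fun y1 y2 => \sum_(z <- DR e.1.2) \sum_(u <- DR e.2) f y1 z.1 u.1 (y2 * z.2 * u.2))) //; last by lin_solve.
  apply: eq_bigr => z _.
  rewrite (@evcoinv _ (fun u1 u2 => f e.1.1 z.1 u1 (1 * z.2 * u2))) //; last by lin_solve.
  by rewrite mul1r mulr1.
have [L' [hLL' hL'c]] := DESC hLc invL.
have hNL' := teq3_trans hNL hLL'.
have m12 : forall (W : lmodType k) (g : P -> P -> W), bilinear2 g -> \sum_(e <- L') g (e.1.1 * e.1.2) e.2 = 0.
  move=> W g hg; rewrite -(teq3E hNL' (f := fun a b c => g (a * b) c)); last by lin_solve.
  exact: mu12_N.
have m23 : forall (W : lmodType k) (g : P -> P -> W), bilinear2 g -> \sum_(e <- L') g e.1.1 (e.1.2 * e.2) = 0.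
  move=> W g hg; rewrite -(teq3E hNL' (f := fun a b c => g a (b * c))); last by lin_solve.
  exact: mu23_N.
exists [seq ([:: (e.1.1, e.1.2); (- (e.1.1 * e.1.2), 1)], [:: (1, e.2); (- e.2, 1)]) | e <- L'].
split.
  move=> x /mapP [e he ->] /=; have [c1 c2 c3] := hL'c e he.
  split; (split; [rewrite /inOmega1 /mu2 !big_cons big_nil /=; rewrite ?mulr1 ?mul1r ?addr0 ?subrr //|]).
  - exists [:: (e.1.1, e.1.2); (- (e.1.1 * e.1.2), 1)]; last by apply: teq2_refl.
    move=> y; rewrite !inE => /orP [/eqP -> //|/eqP ->] /=; split; [apply: coinv_opp; apply: coinv_mul |]; by [|apply: coinv1].
  - exists [:: (1, e.2); (- e.2, 1)]; last by apply: teq2_refl.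
    move=> y; rewrite !inE => /orP [/eqP -> //|/eqP ->] /=; split; by [apply: coinv1 | apply: coinv_opp].
apply: (teq3_trans hNL'); apply/teq3P => W F hF.
rewrite sum_flatmap big_map; symmetry.
rewrite (eq_bigr (fun e => F e.1.1 e.1.2 e.2 - F e.1.1 (e.1.2 * e.2) 1 - F (e.1.1 * e.1.2) 1 e.2 + F (e.1.1 * e.1.2) e.2 1)); last first.
  move=> e _; rewrite sum_mul11 !big_cons !big_nil /= !addr0 !mulr1 !mul1r mulrN.
  move/tri3P: hF => [h1 h2 _].
  rewrite (lin1_N (h1 _ _)) (lin1_N (h2 _ _)) /= (lin1_N (h1 _ _)) /= (lin1_N (h2 _ _)) /= opprK.
  by rewrite !addrA.
rewrite !big_split /= !sumrN.
rewrite (m23 _ (fun a b => F a b 1)); last by lin_solve.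
rewrite (m12 _ (fun a b => F a 1 b)); last by lin_solve.
rewrite (m12 _ (fun a b => F a b 1)); last by lin_solve.
by rewrite !oppr0 !addr0.
Qed.


Lemma nabla_teq t t' : teq2 t t' -> teq3 (nabla_rep DR theta omega t) (nabla_rep DR theta omega t').
Proof.
move=> h; apply/teq3P => W F hF; rewrite !sum_nabla.
by apply: (teq2E h (f := fun p v => \sum_(a <- Dcov DR omega p) \sum_(b <- theta v) F a.1 (a.2 * b.1) b.2)); lin_solve.
Qed.

Lemma sum_s_theta (W : zmodType) (t : seq (P * V)) (F : P * P -> W) :
  \sum_(u <- s_theta theta t) F u = \sum_(x <- t) \sum_(y <- theta x.2) F (x.1 * y.1, y.2).
Proof. rewrite /s_theta sum_flatmap; apply: eq_bigr => x _; by rewrite big_map. Qed.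

Lemma nabla_expand (W : lmodType k) (F : P -> P -> P -> W) t : trilinear3 F ->
  \sum_(e <- nabla_rep DR theta omega t) F e.1.1 e.1.2 e.2 =
  \sum_(x <- t) \sum_(b <- theta x.2) F 1 (x.1 * b.1) b.2
  - \sum_(x <- t) \sum_(b <- theta x.2) F x.1 b.1 b.2
  - \sum_(x <- t) \sum_(y <- DR x.1) \sum_(z <- omega y.2) \sum_(b <- theta x.2) F (y.1 * z.1) (z.2 * b.1) b.2.
Proof.
move=> hF; rewrite sum_nabla -!sumrB; apply: eq_bigr => x _.
rewrite (@DcovE _ (fun a' b' => \sum_(b <- theta x.2) F a' (b' * b.1) b.2)); last by lin_solve.
congr (_ + _ - _).
rewrite -sumrN; apply: eq_bigr => b _; rewrite mul1r.
by move/tri3P: hF => [h1 _ _]; rewrite (lin1_N (h1 _ _)).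
Qed.

Lemma formula w t : teq2 (s_theta theta t) w ->
  teq3 (nabla_rep DR theta omega t) (nabla_formula DR theta omega w t).
Proof.
move=> hw; apply/teq3P => W F hF; rewrite nabla_expand //.
rewrite /nabla_formula !big_cat /= !(sum_neg3 _ hF) big_map /=.
rewrite -(teq2E hw (f := fun a b => F 1 a b)); last by lin_solve.
rewrite sum_s_theta sum_allpairs sum_flatallpairs /=.
rewrite addrA; congr (_ - _ - _).
apply: eq_bigr => x _; apply: eq_bigr => y _; by rewrite sum_mul11 big_map.
Qed.

Lemma deriv m w t t' : coinv DR m -> in_E DR delta t -> teq2 (s_theta theta t) w ->
  in_E DR delta t' -> teq2 (s_theta theta t') (lmul m w) ->
  teq3 (nabla_rep DR theta omega t') (lmul3 m (nabla_rep DR theta omega t) ++ mul11 (dP m) w).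
Proof.
move=> hm hE hw hE' hw'.
pose mt := [seq (m * x.1, x.2) | x <- t].
have hEm : in_E DR delta mt.
  apply/teq3P => W F hF.
  rewrite sum_flatmap !big_map /=.
  have := @evE _ (fun a v h => F (m * a) v h) t hE; rewrite /= => <-; last by lin_solve.
  apply: eq_bigr => x _; rewrite sum_allpairs.
  rewrite (@evDRmul _ (fun a h => \sum_(z <- delta x.2) F a z.1 (h * z.2))); last by lin_solve.
  rewrite (@evcoinv _ (fun a h => \sum_(y <- DR x.1) \sum_(z <- delta x.2) F (a * y.1) z.1 (h * y.2 * z.2))) //; last by lin_solve.
  apply: eq_bigr => y _; apply: eq_bigr => z _; by rewrite mul1r.
have hsm : teq2 (s_theta theta mt) (s_theta theta t').
  apply: (teq2_trans _ (teq2_sym hw')); apply: (teq2_trans _ (teq2_lmul m hw)).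
  apply/teq2P => W g hg; rewrite sum_s_theta big_map /=.
  rewrite /lmul big_map sum_s_theta; apply: eq_bigr => x _; apply: eq_bigr => y _ /=; by rewrite mulrA.
have htt : teq2 t' mt by apply: hsinj => //; apply: teq2_sym.
apply: (teq3_trans (nabla_teq htt)).
apply/teq3P => W F hF.
rewrite big_cat /= /lmul3 big_map /= sum_mul11 /dP !big_cons big_nil /=.
rewrite (@nabla_expand _ (fun a b c => F (m * a) b c)) //; last by lin_solve.
rewrite nabla_expand // !big_map /=.
rewrite addr0.
rewrite -(teq2E hw (f := fun a b => F 1 (m * a) b)); last by lin_solve.
rewrite -(teq2E hw (f := fun a b => F (- m) (1 * a) b)); last by lin_solve.
rewrite !sum_s_theta /=.
have e3 : \sum_(x <- t) \sum_(y <- DR (m * x.1)) \sum_(z <- omega y.2) \sum_(b <- theta x.2) F (y.1 * z.1) (z.2 * b.1) b.2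
  = \sum_(x <- t) \sum_(y <- DR x.1) \sum_(z <- omega y.2) \sum_(b <- theta x.2) F (m * (y.1 * z.1)) (z.2 * b.1) b.2.
  apply: eq_bigr => x _.
  rewrite (@evDRmul _ (fun a h => \sum_(z <- omega h) \sum_(b <- theta x.2) F (a * z.1) (z.2 * b.1) b.2)); last by lin_solve.
  rewrite (@evcoinv _ (fun a h => \sum_(y <- DR x.1) \sum_(z <- omega (h * y.2)) \sum_(b <- theta x.2) F (a * y.1 * z.1) (z.2 * b.1) b.2)) //; last by lin_solve.
  apply: eq_bigr => y _; rewrite mul1r; apply: eq_bigr => z _; apply: eq_bigr => b _; by rewrite !mulrA.
rewrite e3.
have hN : forall a b c, F (- a) b c = - F a b c by move=> a b c; move/tri3P: hF => [h1 _ _]; rewrite (lin1_N (h1 _ _)).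
have eC1 : \sum_(i <- t) \sum_(y <- theta i.2) F 1 (m * (i.1 * y.1)) y.2 =
           \sum_(x <- t) \sum_(b <- theta x.2) F 1 (m * x.1 * b.1) b.2.
  by apply: eq_bigr => x _; apply: eq_bigr => b _; rewrite mulrA.
have eC2 : \sum_(i <- t) \sum_(y <- theta i.2) F (- m) (1 * (i.1 * y.1)) y.2 =
           - \sum_(x <- t) \sum_(b <- theta x.2) F (m * 1) (x.1 * b.1) b.2.
  rewrite -sumrN; apply: eq_bigr => x _; rewrite -sumrN; apply: eq_bigr => b _.
  by rewrite mul1r mulr1 hN.
rewrite eC1 eC2.
by rewrite addrC !addrA addrNK.
Qed.


Lemma main_result :
  (forall (w : seq (P * P)) (t : seq (P * V)),
     inOmega1M (coinv DR) w -> in_E DR delta t -> teq2 (s_theta theta t) w ->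
     [/\ inOmega2M (coinv DR) (nabla_rep DR theta omega t),
         (forall t' : seq (P * V), in_E DR delta t' -> teq2 (s_theta theta t') w ->
            teq3 (nabla_rep DR theta omega t') (nabla_rep DR theta omega t)) &
         teq3 (nabla_rep DR theta omega t) (nabla_formula DR theta omega w t)])
  /\
  (forall (m : P) (w : seq (P * P)) (t t' : seq (P * V)),
     coinv DR m -> inOmega1M (coinv DR) w ->
     in_E DR delta t -> teq2 (s_theta theta t) w ->
     in_E DR delta t' -> teq2 (s_theta theta t') (lmul m w) ->
     teq3 (nabla_rep DR theta omega t')
          (lmul3 m (nabla_rep DR theta omega t) ++ mul11 (dP m) w)).
Proof.
split.
- move=> w t _ hE hw; split.
  + exact: Omega2.
  + move=> t' hE' hw'; apply: nabla_teq; apply: hsinj => //.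
    exact: (teq2_trans hw' (teq2_sym hw)).
  + exact: formula.
- move=> m w t t' hm _ hE hw hE' hw'; exact: deriv.
Qed.

End Main.

Theorem proposition3p3 (k : fieldType)
    (H : algType k) (Delta : H -> seq (H * H)) (eps : H -> k) (S : H -> H)
    (P : algType k) (DR : P -> seq (P * H))
    (V : lmodType k) (delta : V -> seq (V * H)) (theta : V -> seq (P * P))
    (omega : H -> seq (P * P)) :
  is_frame_resolution Delta eps S DR delta theta ->
  is_connection Delta eps S DR omega ->
  left_strong DR omega ->
  (forall (w : seq (P * P)) (t : seq (P * V)),
     inOmega1M (coinv DR) w -> in_E DR delta t -> teq2 (s_theta theta t) w ->
     [/\ inOmega2M (coinv DR) (nabla_rep DR theta omega t),
         (forall t' : seq (P * V), in_E DR delta t' -> teq2 (s_theta theta t') w ->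
            teq3 (nabla_rep DR theta omega t') (nabla_rep DR theta omega t)) &
         teq3 (nabla_rep DR theta omega t) (nabla_formula DR theta omega w t)])
  /\
  (forall (m : P) (w : seq (P * P)) (t t' : seq (P * V)),
     coinv DR m -> inOmega1M (coinv DR) w ->
     in_E DR delta t -> teq2 (s_theta theta t) w ->
     in_E DR delta t' -> teq2 (s_theta theta t') (lmul m w) ->
     teq3 (nabla_rep DR theta omega t')
          (lmul3 m (nabla_rep DR theta omega t) ++ mul11 (dP m) w)).
Proof.
move=> [[[hH hCA _ _] hVc] [hthlin hthOm hthEq hthPOM] _ hsinj _] [homlin homOm hom1 _ homEq] hLS.
move: hH => [[hDlin _] _ hDco [[hepslin _ _ hcoL _] [hSlin _ hantiL hantiR]]].
move: hCA => [[hDRlin hDRco _] hDRmul hDR1].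
by apply: main_result.
Qed.
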